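(* For all integers $a,b,c,d\in\mathbb Z$, the following are equivalent in the algebra $(\mathbb Z,+,\mathbb Z)$: (1) $a:b::_m c:d$; (2) there are $k,\ell,o,u\in\mathbb Z$ with $a=k+o$, $b=\ell+o$, $c=k+u$, $d=\ell+u$; (3) $a-b=c-d$.
   Context: $(\mathbb Z,+,\mathbb Z)$ is the algebra with universe $\mathbb Z$, binary addition, and every integer as a constant (0-ary operation). Terms are built from a variable set $X$, $+$ and integer constants; $X(s)$ denotes the variables of term $s$. A justification is a pair of terms $s\to t$ with $X(t)\subseteq X(s)$. Monolinear justifications are those in which $s$ and $t$ contain no variable other than one fixed variable $x$, and $x$ occurs at most once in $s$ and at most once in $t$. For $a,b\in\mathbb Z$, $\uparrow^m(a\to b)$ is the set of monolinear justifications $s\to t$ with $a=s(\mathbf o)$, $b=t(\mathbf o)$ for some value $\mathbf o$ of the variables; $\uparrow^m(a\to b:\!\cdot\,c\to d):=\uparrow^m(a\to b)\cap\uparrow^m(c\to d)$. A monolinear justification is trivial if it lies in $\uparrow^m(a'\to b':\!\cdot\,c'\to d')$ for all $a',b',c',d'$. The arrow proportion $a\to b:\!\cdot_m\,c\to d$ holds iff either (i) all justifications in $\uparrow^m(a\to b)\cup\uparrow^m(c\to d)$ are trivial, or (ii) $J_d:=\uparrow^m(a\to b:\!\cdot\,c\to d)$ contains a non-trivial justification and for every $d'$, $J_d\subseteq J_{d'}$ implies $J_{d'}$ contains a non-trivial justification and $J_{d'}\subseteq J_d$ (inclusions ignoring trivial justifications). Finally $a:b::_m c:d$ iff $a\to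 b:\!\cdot_m\,c\to d$, $b\to a:\!\cdot_m\,d\to c$, $c\to d:\!\cdot_m\,a\to b$ and $d\to c:\!\cdot_m\,b\to a$ all hold. *)

(* Defs.v *)
From Stdlib Require Import ZArith Arith.
Open Scope Z_scope.

(* Terms of the algebra (Z, +, Z): variables (indexed by nat), integer
   constants (0-ary operations) and binary addition. *)
Inductive term : Type :=
  | TVar : nat -> term
  | TCst : Z -> term
  | TAdd : term -> term -> term.

Fixpoint eval (o : nat -> Z) (t : term) : Z :=
  match t with
  | TVar n => o n
  | TCst z => z
  | TAdd s u => eval o s + eval o u
  end.

Fixpoint occ (n : nat) (t : term) : nat :=
  match t with
  | TVar m => if Nat.eqb n m then 1%nat else 0%nat
  | TCst _ => 0%nat
  | TAdd s u => (occ n s + occ n u)%nat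
  end.

Definition xvar : nat := 0%nat.

Definition justification : Type := (term * term)%type.

Definition is_justification (j : justification) : Prop :=
  forall n, (0 < occ n (snd j))%nat -> (0 < occ n (fst j))%nat.

Definition monolinear (j : justification) : Prop :=
  is_justification j /\
  (forall n, n <> xvar -> occ n (fst j) = 0%nat /\ occ n (snd j) = 0%nat) /\
  (occ xvar (fst j) <= 1)%nat /\ (occ xvar (snd j) <= 1)%nat.

Definition up (a b : Z) (j : justification) : Prop :=
  monolinear j /\ exists o : nat -> Z, a = eval o (fst j) /\ b = eval o (snd j).

Definition up2 (a b c d : Z) (j : justification) : Prop :=
  up a b j /\ up c d j.

Definition trivial_just (j : justification) : Prop :=
  monolinear j /\ forall a' b' c' d', up2 a' b' c' d' j.

Definition incl_nt (J K : justification -> Prop) : Prop :=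
  forall j, J j -> ~ trivial_just j -> K j.

Definition has_nontrivial (J : justification -> Prop) : Prop :=
  exists j, J j /\ ~ trivial_just j.

Definition arrow_prop (a b c d : Z) : Prop :=
  (forall j, up a b j \/ up c d j -> trivial_just j)
  \/
  (has_nontrivial (up2 a b c d) /\
   forall d', incl_nt (up2 a b c d) (up2 a b c d') ->
     has_nontrivial (up2 a b c d') /\ incl_nt (up2 a b c d') (up2 a b c d)).

Definition analogy_m (a b c d : Z) : Prop :=
  arrow_prop a b c d /\ arrow_prop b a d c /\
  arrow_prop c d a b /\ arrow_prop d c b a.

(* Main.v *)
Require Import Defs.
From Stdlib Require Import ZArith Lia.
Open Scope Z_scope.

Lemma lin_form (t : term) : (forall n, n <> xvar -> occ n t = 0%nat) ->
  exists k, forall o, eval o t = Z.of_nat (occ xvar t) * o xvar + k.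
Proof.
  induction t as [m|z|s IHs u IHu]; intros H.
  - destruct m as [|m].
    + exists 0. intros o. unfold xvar. cbn [eval occ Nat.eqb Z.of_nat]. lia.
    + specialize (H (S m) ltac:(unfold xvar; lia)). simpl in H.
      rewrite Nat.eqb_refl in H. discriminate.
  - exists z. intros o. simpl. lia.
  - simpl in H. destruct IHs as [k1 H1].
    { intros n Hn. specialize (H n Hn). lia. }
    destruct IHu as [k2 H2].
    { intros n Hn. specialize (H n Hn). lia. }
    exists (k1 + k2). intros o. simpl. rewrite H1, H2, Nat2Z.inj_add. lia.
Qed.

Lemma up2_char a b c d j : up a b j -> up c d j -> b = d \/ a - b = c - d.
Proof.
  destruct j as [s t]. intros [[Hj [Hn [Hs Ht]]] [o1 [E1 F1]]] [_ [o2 [E2 F2]]].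
  simpl in *.
  destruct (lin_form s) as [ks Ks]. { intros n H. apply (Hn n H). }
  destruct (lin_form t) as [kt Kt]. { intros n H. apply (Hn n H). }
  rewrite Ks in E1, E2. rewrite Kt in F1, F2.
  unfold is_justification in Hj. specialize (Hj xvar). simpl in Hj.
  assert (Hj' : (occ xvar t <= occ xvar s)%nat).
  { destruct (occ xvar t); [lia|]. specialize (Hj ltac:(lia)). lia. }
  clear Hj.
  destruct (occ xvar s) as [|[|]]; destruct (occ xvar t) as [|[|]]; try lia.
Qed.

Lemma not_trivial j : ~ trivial_just j.
Proof.
  intros [Hm H].
  destruct j as [s t].
  destruct (H 0 0 0 0) as [[_ [o [E F]]] _].
  destruct (H 0 1 0 1) as [[_ [o' [E' F']]] _].
  destruct (H 1 0 1 0) as [[_ [o'' [E'' F'']]] _].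
  destruct Hm as [Hj [Hn [Hs Ht]]]. simpl in *.
  destruct (lin_form s) as [ks Ks]. { intros n H0. apply (Hn n H0). }
  destruct (lin_form t) as [kt Kt]. { intros n H0. apply (Hn n H0). }
  rewrite Ks in E, E', E''. rewrite Kt in F, F', F''.
  unfold is_justification in Hj. specialize (Hj xvar). simpl in Hj.
  assert (Hj' : (occ xvar t <= occ xvar s)%nat).
  { destruct (occ xvar t); [lia|]. specialize (Hj ltac:(lia)). lia. }
  clear Hj.
  destruct (occ xvar s) as [|[|]]; destruct (occ xvar t) as [|[|]]; try lia.
Qed.

Definition jx (k : Z) : justification := (TVar xvar, TAdd (TVar xvar) (TCst k)).

Lemma up_jx a b k : up a b (jx k) <-> b = a + k.
Proof.
  split.
  - intros [_ [o [E F]]]. simpl in *. lia.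
  - intros ->. split.
    + split; [|split; [|split]].
      * intros n. destruct n; simpl; lia.
      * intros n Hn. destruct n; [unfold xvar in Hn; lia|]. simpl. split; reflexivity.
      * simpl. lia.
      * simpl. lia.
    + exists (fun _ => a). simpl. split; reflexivity.
Qed.

Lemma arrow_of a b c d : a - b = c - d -> arrow_prop a b c d.
Proof.
  intros H. right. split.
  - exists (jx (b - a)). split; [|apply not_trivial].
    split; apply up_jx; lia.
  - intros d' Hi.
    assert (Hd : d' = d).
    { destruct (Hi (jx (b - a))) as [_ Hu].
      - split; apply up_jx; lia.
      - apply not_trivial.
      - apply up_jx in Hu. lia. }
    subst d'. split.
    + exists (jx (b - a)). split; [|apply not_trivial]. split; apply up_jx; lia.
    + intros j Hj _. exact Hj.
Qed.

Lemma arrow_to a b c d : arrow_prop a b c d -> b = d \/ a - b = c - d.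
Proof.
  intros [H | [[j [[H1 H2] _]] _]].
  - exfalso. apply (not_trivial (jx (b - a))). apply H. left. apply up_jx. lia.
  - exact (up2_char _ _ _ _ _ H1 H2).
Qed.

Theorem mainTheorem4 (a b c d : Z) :
  (analogy_m a b c d <->
     exists k l o u : Z, a = k + o /\ b = l + o /\ c = k + u /\ d = l + u) /\
  ((exists k l o u : Z, a = k + o /\ b = l + o /\ c = k + u /\ d = l + u) <->
     a - b = c - d).
Proof.
  assert (E : (exists k l o u : Z, a = k + o /\ b = l + o /\ c = k + u /\ d = l + u) <->
     a - b = c - d).
  { split.
    - intros [k [l [o [u H]]]]. lia.
    - intros H. exists a, b, 0, (c - a). lia. }
  split; [|exact E].
  rewrite E. split.
  - intros [H1 [H2 _]]. apply arrow_to in H1. apply arrow_to in H2. lia.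
  - intros H. unfold analogy_m.
    split; [|split; [|split]]; apply arrow_of; lia.
Qed.
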